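(* Let $\phi$ be a partial listing of $A$ and let $\alpha'=\alpha_k\cdots\alpha_{l+1}$ be a prefix of $A$ (with $2\le l+1\le k$). Then (1) $\alpha'$ is non-empty if and only if $\phi(\alpha'0\cdots0)=1$; and (2) $\alpha'$ is full if and only if $\phi(\alpha'(a_l-1)(a_{l-1}-1)\cdots(a_2-1))=1$.
   Context: Let $k\ge 2$ and let $a_k,\dots,a_2$ be positive integers with $a_2\le a_i$ for all $2<i\le k$. Let $A=[a_k]\times\cdots\times[a_2]$, where $[a]=\{0,\dots,a-1\}$; elements are written $\alpha=\alpha_k\alpha_{k-1}\cdots\alpha_2$. A prefix of $\alpha$ is $\alpha_k\cdots\alpha_{l+1}$ for some $2\le l+1\le k$; $\varnothing$ denotes the empty prefix; for a tuple $\beta=\alpha_k\cdots\alpha_{l+1}$ and $i$, $\beta i$ denotes $\alpha_k\cdots\alpha_{l+1}i$. An array $\phi:A\to\{0,1\}$ is initialized to $0$ everywhere. A tuple $\beta$ (a prefix or an element) is non-empty if some $\alpha\in A$ having $\beta$ as a prefix (or equal to $\beta$) has $\phi(\alpha)=1$, empty otherwise, and full if all such $\alpha$ have $\phi(\alpha)=1$. The procedure Next$(\beta)$, for $\beta=\alpha_k\cdots\alpha_{l+1}$ (with $l=k$ for $\beta=\varnothing$): let $m$ be the least $i$ such that $\beta i$ is empty; if $l=2$, set $\phi(\beta m):=1$ and stop; otherwise, if $m\ge a_2$, replace $m$ by the least $i$ such that $\beta i$ is not full; then call Next$(\beta m)$. A partial listing of $A$ is an array $\phi$ obtained from the all-zero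 array by finitely many calls of Next$(\varnothing)$. *)

(* Defs.v *)
From mathcomp Require Import all_boot.
Set Implicit Arguments. Unset Strict Implicit. Unset Printing Implicit Defensive.

(* Parameters: k : nat and a : nat -> nat (only a 2, ..., a k matter).
   A tuple alpha_k alpha_(k-1) ... alpha_(l+1) is represented by the sequence
   [:: alpha_k; ...; alpha_(l+1)] : seq nat, so position j holds coordinate k - j,
   and a tuple of size p has l = k - p (the empty prefix has l = k).
   The tuple "beta i" is  rcons beta i.  An array phi : A -> {0,1} is a
   function seq nat -> bool (its values outside A are irrelevant). *)

(* Membership in A = [a_k] x ... x [a_2]. *)
Definition inA (k : nat) (a : nat -> nat) (alpha : seq nat) : Prop :=
  size alpha = k - 1 /\ forall j, j < k - 1 -> nth 0 alpha j < a (k - j).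

Definition nonempty (k : nat) (a : nat -> nat) (phi : seq nat -> bool)
  (beta : seq nat) : Prop :=
  exists alpha, [/\ inA k a alpha, prefix beta alpha & phi alpha].

Definition empty k a phi beta : Prop := ~ nonempty k a phi beta.

Definition full (k : nat) (a : nat -> nat) (phi : seq nat -> bool)
  (beta : seq nat) : Prop :=
  forall alpha, inA k a alpha -> prefix beta alpha -> phi alpha.

Definition least (P : nat -> Prop) (m : nat) : Prop :=
  P m /\ forall j, j < m -> ~ P j.

Definition setone (phi : seq nat -> bool) (x : seq nat) : seq nat -> bool :=
  fun s => (s == x) || phi s.

(* Next k a phi beta phi' : the call Next(beta) on array phi terminates with
   array phi'.  (Relational semantics: a call whose "least i" does not exist
   does not produce any array.) *)
Inductive Next (k : nat) (a : nat -> nat) :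
  (seq nat -> bool) -> seq nat -> (seq nat -> bool) -> Prop :=
| Next_last phi beta m :
    k - size beta = 2 ->
    least (fun i => empty k a phi (rcons beta i)) m ->
    Next k a phi beta (setone phi (rcons beta m))
| Next_rec phi beta m m' phi' :
    2 < k - size beta ->
    least (fun i => empty k a phi (rcons beta i)) m ->
    (if m < a 2 then m' = m
     else least (fun i => ~ full k a phi (rcons beta i)) m') ->
    Next k a phi (rcons beta m') phi' ->
    Next k a phi beta phi'.

Inductive partial_listing (k : nat) (a : nat -> nat) : (seq nat -> bool) -> Prop :=
| pl_zero : partial_listing k a (fun _ => false)
| pl_next phi phi' :
    partial_listing k a phi -> Next k a phi [::] phi' -> partial_listing k a phi'.

(* Main.v *)
Require Import Defs.
From mathcomp Require Import all_boot zify.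
From Stdlib Require Import Classical.
Set Implicit Arguments. Unset Strict Implicit.

Lemma pre_rcons_nth (b al : seq nat) :
  prefix b al -> size b < size al -> prefix (rcons b (nth 0 al (size b))) al.
Proof.
rewrite !prefixE => /eqP hb hs.
rewrite size_rcons (take_nth 0 hs) hb //.
Qed.

Lemma pre_cmp (u v x : seq nat) :
  prefix u x -> prefix v x -> size u <= size v -> prefix u v.
Proof.
rewrite !prefixE => /eqP hu /eqP hv hs.
by rewrite -hv take_takel // hu.
Qed.

Lemma pre_rcons_eq (b x : seq nat) i j :
  prefix (rcons b i) x -> prefix (rcons b j) x -> i = j.
Proof.
rewrite !prefixE !size_rcons => /eqP -> /eqP h.
by move: h; rewrite -!cats1 => /eqP; rewrite eqseq_cat // => /andP[_ /eqP [->]].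
Qed.

Lemma pre_size_eq (b x : seq nat) : prefix b x -> size b = size x -> b = x.
Proof. by rewrite prefixE => /eqP h hs; rewrite -h hs take_size. Qed.
Unset Implicit Arguments. Set Strict Implicit.

Section S.
Variables (k : nat) (a : nat -> nat).
Hypothesis hk : 2 <= k.
Hypothesis ha : forall i, 2 <= i <= k -> 0 < a i.

Definition valid (g : seq nat) :=
  size g <= k - 1 /\ forall j, j < size g -> nth 0 g j < a (k - j).

Lemma inA_cat g s : valid g -> size g + size s = k - 1 ->
  (forall j, j < size s -> nth 0 s j < a (k - size g - j)) -> inA k a (g ++ s).
Proof.
move=> [hg1 hg2] hs hn; split; first by rewrite size_cat.
move=> j hj; rewrite nth_cat; case: ifP => hjg; first exact: hg2.
have := hn (j - size g); rewrite (_ : k - size g - (j - size g) = k - j); last by lia.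
apply; lia.
Qed.

Lemma leaf0 g : valid g -> inA k a (g ++ nseq (k - 1 - size g) 0).
Proof.
move=> hg; apply: inA_cat => //; first by rewrite size_nseq; case: hg; lia.
move=> j; rewrite size_nseq nth_nseq => hj; rewrite hj; apply: ha; lia.
Qed.

Lemma valid_rcons b j : valid b -> size b < k - 1 -> j < a (k - size b) ->
  valid (rcons b j).
Proof.
move=> [h1 h2] hs hj; split; first by rewrite size_rcons.
move=> i; rewrite size_rcons nth_rcons ltnS => hi.
case: ifP => hib; first by apply: h2.
have -> : i = size b by lia.
by rewrite eqxx.
Qed.

Lemma valid_pre b x : inA k a x -> prefix b x -> valid b.
Proof.
move=> [hx1 hx2] /prefixP [s e]; rewrite e in hx1 hx2; split.
  by move: hx1; rewrite size_cat; lia.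
move=> j hj; have := hx2 j; rewrite nth_cat hj; apply.
by move: hx1; rewrite size_cat; lia.
Qed.

Lemma valid_leaf g : valid g -> size g = k - 1 -> inA k a g.
Proof. by move=> [_ h2] hs; split => // j; rewrite -hs; apply: h2. Qed.

Lemma leaf_iff phi g : inA k a g ->
  (nonempty k a phi g <-> phi g) /\ (full k a phi g <-> phi g).
Proof.
move=> hg; split; split.
- move=> [al [hal hp hphi]].
  by rewrite (pre_size_eq hp) // (proj1 hal) (proj1 hg).
- by move=> h; exists g; split => //; apply: prefix_refl.
- by move=> h; apply: h => //; apply: prefix_refl.
- move=> h al hal hp.
  by rewrite -(pre_size_eq hp) // (proj1 hal) (proj1 hg).
Qed.

Lemma full_ne phi g : valid g -> full k a phi g -> nonempty k a phi g.
Proof.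
move=> hg hf; exists (g ++ nseq (k - 1 - size g) 0); split.
- exact: leaf0.
- exact: prefix_prefix.
- apply: hf; [exact: leaf0 | exact: prefix_prefix].
Qed.

Lemma setone_other phi x d : ~~ prefix d x ->
  (nonempty k a (setone phi x) d <-> nonempty k a phi d) /\
  (full k a (setone phi x) d <-> full k a phi d).
Proof.
move=> hd; have hne : forall al, prefix d al -> (al == x) = false.
  by move=> al hp; apply/eqP => e; move: hd; rewrite -e hp.
split; split.
- move=> [al [h1 h2 h3]]; exists al; split => //; move: h3; by rewrite /setone hne.
- move=> [al [h1 h2 h3]]; exists al; split => //; by rewrite /setone h3 orbT.
- move=> hf al h1 h2; have := hf al h1 h2; by rewrite /setone hne.
- move=> hf al h1 h2; by rewrite /setone hf ?orbT.
Qed.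

Lemma setone_notA phi x d : ~ inA k a x ->
  (nonempty k a (setone phi x) d <-> nonempty k a phi d) /\
  (full k a (setone phi x) d <-> full k a phi d).
Proof.
move=> hd; have hne : forall al, inA k a al -> (al == x) = false.
  by move=> al hp; apply/eqP => e; apply: hd; rewrite -e.
split; split.
- move=> [al [h1 h2 h3]]; exists al; split => //; move: h3; by rewrite /setone hne.
- move=> [al [h1 h2 h3]]; exists al; split => //; by rewrite /setone h3 orbT.
- move=> hf al h1 h2; have := hf al h1 h2; by rewrite /setone hne.
- move=> hf al h1 h2; by rewrite /setone hf ?orbT.
Qed.

Lemma setone_mono phi x d :
  (nonempty k a phi d -> nonempty k a (setone phi x) d) /\
  (full k a phi d -> full k a (setone phi x) d).
Proof.
split.
- move=> [al [h1 h2 h3]]; exists al; split => //; by rewrite /setone h3 orbT.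
- move=> hf al h1 h2; by rewrite /setone hf ?orbT.
Qed.

Definition nodeok phi g := forall i j, i < j -> j < a (k - size g) ->
  (nonempty k a phi (rcons g j) -> nonempty k a phi (rcons g i)) /\
  (full k a phi (rcons g j) -> full k a phi (rcons g i)).

Definition Inv phi := forall g, valid g -> size g <= k - 2 -> nodeok phi g.

Definition InvEx b phi := forall g, valid g -> size g <= k - 2 ->
  ~ (prefix g b /\ size g < size b) -> nodeok phi g.

Lemma nodeok_other phi x g : nodeok phi g -> ~~ prefix g x -> nodeok (setone phi x) g.
Proof.
move=> hn hg i j hij hj.
have hc : forall l, ~~ prefix (rcons g l) x.
  move=> l; apply/negP => hp; move/negP: hg; apply.
  exact: prefix_trans (prefix_rcons g l) hp.
have [a1 b1] := setone_other phi _ _ (hc i); have [a2 b2] := setone_other phi _ _ (hc j).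
have [h1 h2] := hn i j hij hj.
split; [by move/a2/h1/a1 | by move/b2/h2/b1].
Qed.

Lemma nodeok_notA phi x g : nodeok phi g -> ~ inA k a x -> nodeok (setone phi x) g.
Proof.
move=> hn hx i j hij hj.
have [a1 b1] := setone_notA phi _ (rcons g i) hx.
have [a2 b2] := setone_notA phi _ (rcons g j) hx.
have [h1 h2] := hn i j hij hj.
split; [by move/a2/h1/a1 | by move/b2/h2/b1].
Qed.

Lemma node_step phi b x c : nodeok phi b -> prefix (rcons b c) x ->
  (forall i, i < c -> c < a (k - size b) -> nonempty k a (setone phi x) (rcons b i)) ->
  (forall i, i < c -> c < a (k - size b) ->
     full k a (setone phi x) (rcons b c) -> full k a (setone phi x) (rcons b i)) ->
  nodeok (setone phi x) b.
Proof.
move=> hn hc hne hfu i j hij hj.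
case: (eqVneq j c) => [e|hjc].
  subst j; split; [move=> _; exact: hne | exact: hfu].
have hp : ~~ prefix (rcons b j) x.
  by apply/negP => hp; move: hjc; rewrite (pre_rcons_eq hp hc) eqxx.
have [a2 b2] := setone_other phi _ _ hp.
have [h1 h2] := hn i j hij hj.
have [m1 m2] := setone_mono phi x (rcons b i).
split; [by move/a2/h1/m1 | by move/b2/h2/m2].
Qed.

Lemma next_setone phi b phi' : Next k a phi b phi' ->
  exists x, prefix b x /\ phi' = setone phi x.
Proof.
elim=> {phi b phi'}.
- move=> phi b m _ _; exists (rcons b m); split => //; exact: prefix_rcons.
- move=> phi b m m' phi' _ _ _ _ [x [hx ->]]; exists x; split => //.
  exact: prefix_trans (prefix_rcons b m') hx.
Qed.


Lemma empty_full_contra phi x c : valid c -> size c < k - 1 -> 1 < a 2 ->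
  empty k a phi c -> full k a (setone phi x) c -> False.
Proof.
move=> hc hs ha2 he hf.
set n := k - 1 - size c.
have h0 : inA k a (c ++ nseq n 0) by apply: leaf0.
have h1 : inA k a (c ++ rcons (nseq n.-1 0) 1).
  apply: inA_cat => //; first by rewrite size_rcons size_nseq /n; lia.
  move=> j; rewrite size_rcons size_nseq nth_rcons size_nseq => hj.
  case: ifP => hj1; first by rewrite nth_nseq hj1; apply: ha; lia.
  have -> : j = n.-1 by rewrite /n in hj hj1 *; lia.
  rewrite eqxx (_ : k - size c - n.-1 = 2) //; rewrite /n; lia.
have e0 : c ++ nseq n 0 = x.
  have := hf _ h0 (prefix_prefix _ _); rewrite /setone => /orP[/eqP //|hp].
  by case: he; exists (c ++ nseq n 0); split => //; exact: prefix_prefix.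
have e1 : c ++ rcons (nseq n.-1 0) 1 = x.
  have := hf _ h1 (prefix_prefix _ _); rewrite /setone => /orP[/eqP //|hp].
  by case: he; exists (c ++ rcons (nseq n.-1 0) 1); split => //; exact: prefix_prefix.
have := congr1 (fun s => nth 0 s (size c + n.-1)) (etrans e0 (esym e1)).
rewrite /= !nth_cat ltnNge leq_addr /= addKn nth_nseq nth_rcons size_nseq ltnn eqxx.
by case: ifP.
Qed.

Lemma next_inv phi b phi' : Next k a phi b phi' -> Inv phi -> valid b -> InvEx b phi'.
Proof.
elim=> {phi b phi'}.
- move=> phi b m hl hm hI hb g hg hgs hgb.
  set x := rcons b m.
  case: (boolP (prefix g x)) => hgx; last by apply: nodeok_other => //; apply: hI.
  case: (classic (inA k a x)) => hxA; last by apply: nodeok_notA => //; apply: hI.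
  have hsb : size b = k - 2 by lia.
  have pgb : prefix g b by apply: pre_cmp hgx (prefix_rcons b m) _; lia.
  have egb : g = b.
    have hn : ~~ (size g < size b) by apply/negP => h; apply: hgb.
    have := size_prefix pgb; move: hn; rewrite -leqNgt => h1 h2.
    by apply: pre_size_eq pgb _; apply/eqP; rewrite eqn_leq h1 h2.
  subst g.
  apply: node_step (hI b hb hgs) (prefix_refl x) _ _.
  + move=> i him _; apply: (proj1 (setone_mono _ _ _)).
    by apply: NNPP => hn; apply: (proj2 hm i him).
  + move=> i him hma _.
    have hiA : inA k a (rcons b i).
      apply: valid_leaf; last by rewrite size_rcons; lia.
      apply: valid_rcons => //; first lia; exact: ltn_trans him hma.
    apply/(proj2 (leaf_iff _ _ hiA)); apply/(proj1 (leaf_iff _ _ hiA)).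
    apply: (proj1 (setone_mono _ _ _)).
    by apply: NNPP => hn; apply: (proj2 hm i him).
- move=> phi b m m' phi' hl hm hm' hN IH hI hb g hg hgs hgb.
  have [x [hcx ephi]] := next_setone _ _ _ hN; subst phi'.
  case: (boolP (prefix g x)) => hgx; last by apply: nodeok_other => //; apply: hI.
  case: (classic (inA k a x)) => hxA; last by apply: nodeok_notA => //; apply: hI.
  have hc : valid (rcons b m') := valid_pre _ _ hxA hcx.
  have hbx : prefix b x := prefix_trans (prefix_rcons b m') hcx.
  case: (leqP (size g) (size b)) => hsz; last first.
    by apply: IH => //; case=> _; rewrite size_rcons ltnS leqNgt hsz.
  have pgb : prefix g b by exact: pre_cmp hgx hbx hsz.
  have egb : g = b.
    have hn : ~~ (size g < size b) by apply/negP => h; apply: hgb.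
    have := size_prefix pgb; move: hn; rewrite -leqNgt => h1 h2.
    by apply: pre_size_eq pgb _; apply/eqP; rewrite eqn_leq h1 h2.
  subst g.
  apply: node_step (hI b hb hgs) hcx _ _.
  + move=> i him hma; apply: (proj1 (setone_mono _ _ _)).
    move: hm'; case: ifP => hm2.
      move=> e; subst m'.
      by apply: NNPP => hn; apply: (proj2 hm i him).
    move=> hm'; apply: full_ne.
      apply: valid_rcons => //; first lia; exact: ltn_trans him hma.
    by apply: NNPP => hn; apply: (proj2 hm' i him).
  + move=> i him hma hf.
    move: hm'; case: ifP => hm2.
      move=> e; subst m'; exfalso.
      apply: (empty_full_contra _ _ _ hc _ _ (proj1 hm) hf); first by rewrite size_rcons; lia.
      by apply: leq_ltn_trans hm2; apply: leq_ltn_trans him.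
    move=> hm'; apply: (proj2 (setone_mono _ _ _)).
    by apply: NNPP => hn; apply: (proj2 hm' i him).
Qed.

Lemma pl_inv phi : partial_listing k a phi -> Inv phi.
Proof.
elim=> {phi}.
- move=> g hg hgs i j hij hj; split.
  + by move=> [al [_ _ ]].
  + move=> hf; have hv : valid (rcons g j) by apply: valid_rcons => //; lia.
    by have [al [_ _]] := full_ne _ _ hv hf.
- move=> phi phi' _ hI hN g hg hgs.
  apply: (next_inv _ _ _ hN hI) => //; idtac.
  by case=> _; rewrite ltn0.
Qed.

Lemma ne_char phi : Inv phi -> forall n b, valid b -> size b + n = k - 1 ->
  (nonempty k a phi b <-> phi (b ++ nseq n 0)).
Proof.
move=> hI; elim=> [|n IH] b hb hs.
  rewrite cats0; apply: (proj1 (leaf_iff _ _ _)); apply: valid_leaf => //; lia.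
have hbk : size b < k - 1 by lia.
have ha0 : 0 < a (k - size b) by apply: ha; lia.
have hv0 : valid (rcons b 0) by apply: valid_rcons.
rewrite /= -cat_rcons -IH //; last by rewrite size_rcons; lia.
split.
- move=> [al [hal hp hphi]].
  have hsa : size b < size al by rewrite (proj1 hal).
  have hpj := pre_rcons_nth hp hsa.
  set j := nth 0 al (size b) in hpj.
  have hj : j < a (k - size b) by apply: (proj2 hal); lia.
  have hnj : nonempty k a phi (rcons b j) by exists al; split.
  case: (posnP j) => hj0; first by rewrite -hj0.
  by apply: (proj1 (hI b hb _ 0 j hj0 hj)) => //; lia.
- move=> [al [hal hp hphi]]; exists al; split => //.
  exact: prefix_trans (prefix_rcons b 0) hp.
Qed.

Lemma full_char phi : Inv phi -> forall n b, valid b -> size b + n = k - 1 ->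
  (full k a phi b <-> phi (b ++ [seq a i - 1 | i <- rev (iota 2 n)])).
Proof.
move=> hI; elim=> [|n IH] b hb hs.
  rewrite /= cats0; apply: (proj2 (leaf_iff _ _ _)); apply: valid_leaf => //; lia.
have hbk : size b < k - 1 by lia.
have ekb : k - size b = 2 + n by lia.
have ha0 : 0 < a (k - size b) by apply: ha; lia.
set c := a (2 + n) - 1.
have hc : c < a (k - size b) by rewrite /c ekb; rewrite ekb in ha0; lia.
have hvc : valid (rcons b c) by apply: valid_rcons.
rewrite (_ : iota 2 n.+1 = iota 2 n ++ [:: 2 + n]); last by rewrite -[n.+1]addn1 iotaD.
rewrite rev_cat /= -cat_rcons -IH //; last by rewrite size_rcons; lia.
split.
- move=> hf al hal hp; apply: hf hal _; exact: prefix_trans (prefix_rcons b c) hp.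
- move=> hf al hal hp.
  have hsa : size b < size al by rewrite (proj1 hal).
  have hpj := pre_rcons_nth hp hsa.
  set j := nth 0 al (size b) in hpj.
  have hj : j < a (k - size b) by apply: (proj2 hal); lia.
  apply: (_ : full k a phi (rcons b j)) hal hpj.
  case: (ltngtP j c) => hjc.
  + by apply: (proj2 (hI b hb _ j c hjc hc)) => //; lia.
  + by move: hjc; rewrite /c; rewrite ekb in hj; lia.
  + by rewrite hjc.
Qed.

End S.

Theorem corollary1 (k : nat) (a : nat -> nat) :
  2 <= k ->
  (forall i, 2 <= i <= k -> 0 < a i) ->
  (forall i, 2 < i <= k -> a 2 <= a i) ->
  forall phi : seq nat -> bool, partial_listing k a phi ->
  forall beta : seq nat,
    1 <= size beta <= k - 1 ->
    (forall j, j < size beta -> nth 0 beta j < a (k - j)) ->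
    let l := k - size beta in
    (nonempty k a phi beta <-> phi (beta ++ nseq (l - 1) 0)) /\
    (full k a phi beta <->
       phi (beta ++ [seq a i - 1 | i <- rev (iota 2 (l - 1))])).
Proof.
move=> hk ha _ phi hpl beta hbs hbn l.
have hI := pl_inv k a hk ha phi hpl.
have hb : valid k a beta by split => //; case/andP: hbs.
have hs : size beta + (l - 1) = k - 1 by rewrite /l; case/andP: hbs; lia.
split; [exact: ne_char | exact: full_char].
Qed.
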